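(* Let $(G,T)$ be a terminal graph obtained from the terminal graph $(G-v,T\setminus\{v\})$ by introducing $v$, and let $k$ be a positive integer. Let $(H,\ell)=\mathcal{C}^c_k(G-v,T\setminus\{v\})$. Construct a labeled graph $(H',\ell')$ as follows. For every node $x$ of $H$ and every color $c\in\{1,\dots,k\}$: if the unique function $\delta:T\to\{1,\dots,k\}$ with $\delta(v)=c$ and $\delta|_{T\setminus\{v\}}=\ell(x)$ is a coloring of $G[T]$, introduce a node $x_c$ with $\ell'(x_c)=\delta$. For every pair of distinct nodes $x_c,y_d$, add an edge between them if and only if $x=y$, or $xy$ is an edge of $H$ and $c=d$. Then $(H',\ell')=\mathcal{C}^c_k(G,T)$. Moreover, given any certificate for $(H,\ell)$, there is a certificate for $(H',\ell')$ such that for every $k$-coloring $\gamma$ of $G$, if $x$ is the $\gamma|_{V(G)\setminus\{v\}}$-node of $H$ and $\gamma(v)=c$, then $x_c$ is the $\gamma$-node of $H'$.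
   Context: A terminal graph $(G,T)$ is a graph $G$ with $T\subseteq V(G)$. $(G,T)$ is obtained from $(G-v,T\setminus\{v\})$ by introducing $v$ if $T\ne V(G)$, $v\in T$ and $N(v)\subseteq T$. A $k$-coloring of $G$ is a map $\alpha:V(G)\to\{1,\dots,k\}$ with $\alpha(u)\ne\alpha(w)$ for all edges $uw$. $\mathcal{C}_k(G)$ has the $k$-colorings as nodes, adjacent iff they differ on exactly one vertex. For $T\subseteq V(G)$, label each coloring $\gamma$ by $\gamma|_T$. A label component is a maximal set of colorings with the same label inducing a connected subgraph of $\mathcal{C}_k(G)$. The contracted solution graph $\mathcal{C}^c_k(G,T)=(H,\ell)$ has one node $x$ per label component $S_x$, distinct $x,y$ adjacent iff some $\gamma\in S_x,\gamma'\in S_y$ are adjacent in $\mathcal{C}_k(G)$, and $\ell(x)$ the common label on $S_x$; labeled graphs are identified up to label-preserving isomorphism. A certificate for $(H,\ell)$ is an assignment of nonempty sets $S_x$ of $k$-colorings of $G$ to the nodes such that: the $S_x$ partition the $k$-colorings; $\gamma|_T=\ell(x)$ for $\gamma\in S_x$; adjacent nodes have distinct labels; each $S_x$ induces a connected subgraph of $\mathcal{C}_k(G)$; distinct $x,y$ are adjacent iff some $\gamma\in S_x$ and $\gamma'\in S_y$ are adjacent in $\mathcal{C}_k(G)$. The $\gamma$-node with respect to a certificate $S$ is the node $x$ with $\gamma\in S_x$. *)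

(* Defs.v *)
From mathcomp Require Import all_boot.

(* A graph is a finite type [V] of vertices with an edge relation [e : rel V]
   (assumed symmetric and irreflexive where needed), restricted to a vertex
   set [W : {set V}] (so G has W = [set: V] and G - v has W = [set~ v]).
   A (partial) map [g : {ffun V -> option 'I_k}] is a k-coloring of (W,e)
   iff it is defined (Some) exactly on W and proper on edges inside W.
   Colors {1..k} are represented by 'I_k. *)

Definition cmap (V : finType) (k : nat) := {ffun V -> option 'I_k}.

Definition is_col (V : finType) (e : rel V) (k : nat) (W : {set V})
  (g : cmap V k) : bool :=
  [forall x, (g x != None) == (x \in W)] &&
  [forall x, forall y, [&& x \in W, y \in W & e x y] ==> (g x != g y)].

Definition col_adj (V : finType) (k : nat) (g g' : cmap V k) : bool :=
  #|[set x | g x != g' x]| == 1.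

Definition lab (V : finType) (k : nat) (T : {set V}) (g : cmap V k) : cmap V k :=
  [ffun x => if x \in T then g x else None].

Definition induces_connected (V : finType) (k : nat) (S : {set cmap V k}) : Prop :=
  S != set0 /\
  forall g g', g \in S -> g' \in S ->
    connect (fun a b => [&& a \in S, b \in S & col_adj V k a b]) g g'.

Definition same_label_conn (V : finType) (e : rel V) (k : nat) (W T : {set V})
  (S : {set cmap V k}) : Prop :=
  (forall g, g \in S -> is_col V e k W g) /\
  (forall g g', g \in S -> g' \in S -> lab V k T g = lab V k T g') /\
  induces_connected V k S.

Definition label_component (V : finType) (e : rel V) (k : nat) (W T : {set V})
  (S : {set cmap V k}) : Prop :=
  same_label_conn V e k W T S /\
  forall S' : {set cmap V k}, S \subset S' -> same_label_conn V e k W T S' -> S' = S.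

(* (N,h,l) is (label-preservingly isomorphic to) the contracted solution
   graph C^c_k((W,e),T). *)
Definition is_contracted (V : finType) (e : rel V) (k : nat) (W T : {set V})
  (N : finType) (h : rel N) (l : N -> cmap V k) : Prop :=
  exists phi : N -> {set cmap V k},
    [/\ injective phi,
        (forall S, label_component V e k W T S <-> exists x, phi x = S),
        (forall x y, h x y <->
           (x != y /\ exists g g', [/\ g \in phi x, g' \in phi y & col_adj V k g g']))
      & (forall x g, g \in phi x -> lab V k T g = l x)].

Definition certificate (V : finType) (e : rel V) (k : nat) (W T : {set V})
  (N : finType) (h : rel N) (l : N -> cmap V k) (S : N -> {set cmap V k}) : Prop :=
  (forall x, S x != set0) /\
  (forall x g, g \in S x -> is_col V e k W g) /\
  (forall g, is_col V e k W g -> exists x, g \in S x) /\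
  (forall x y g, g \in S x -> g \in S y -> x = y) /\
  (forall x g, g \in S x -> lab V k T g = l x) /\
  (forall x y, h x y -> l x != l y) /\
  (forall x, induces_connected V k (S x)) /\
  (forall x y, x != y ->
         (h x y <-> exists g g', [/\ g \in S x, g' \in S y & col_adj V k g g'])).

Definition introduces (V : finType) (e : rel V) (T : {set V}) (v : V) : Prop :=
  [/\ T != [set: V], v \in T & forall u, e v u -> u \in T].

Definition ext (V : finType) (k : nat) (v : V) (c : 'I_k) (L : cmap V k) : cmap V k :=
  [ffun u => if u == v then Some c else L u].

Definition del (V : finType) (k : nat) (v : V) (g : cmap V k) : cmap V k :=
  [ffun u => if u == v then None else g u].

Definition Hp_cond (V : finType) (e : rel V) (k : nat) (T : {set V}) (v : V)
  (N : finType) (l : N -> cmap V k) (p : N * 'I_k) : bool :=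
  is_col V e k T (ext V k v p.2 (l p.1)).

Definition Hp_node (V : finType) (e : rel V) (k : nat) (T : {set V}) (v : V)
  (N : finType) (l : N -> cmap V k) : finType :=
  {p : N * 'I_k | Hp_cond V e k T v N l p}.

Definition Hp_edge (V : finType) (e : rel V) (k : nat) (T : {set V}) (v : V)
  (N : finType) (h : rel N) (l : N -> cmap V k) : rel (Hp_node V e k T v N l) :=
  fun p q => (p != q) &&
    (((val p).1 == (val q).1) || (h (val p).1 (val q).1 && ((val p).2 == (val q).2))).

Definition Hp_lab (V : finType) (e : rel V) (k : nat) (T : {set V}) (v : V)
  (N : finType) (l : N -> cmap V k) (p : Hp_node V e k T v N l) : cmap V k :=
  ext V k v (val p).2 (l (val p).1).

Definition Hp_mk (V : finType) (e : rel V) (k : nat) (T : {set V}) (v : V)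
  (N : finType) (l : N -> cmap V k) (x : N) (c : 'I_k)
  (H : Hp_cond V e k T v N l (x, c)) : Hp_node V e k T v N l :=
  exist _ (x, c) H.

(* Main.v *)
Require Import Defs.
From mathcomp Require Import all_boot.

Set Implicit Arguments. Unset Strict Implicit. Unset Printing Implicit Defensive.

Section Gen.
Variables (V : finType) (e : rel V) (k : nat).

Lemma colP W (g : cmap V k) : is_col V e k W g <->
  (forall x, (g x != None) = (x \in W)) /\
  (forall x y, x \in W -> y \in W -> e x y -> g x != g y).
Proof.
rewrite /is_col; split.
- case/andP=> /forallP H1 /forallP H2; split => [x|x y xW yW exy]; first exact: (eqP (H1 x)).
  by move: (H2 x) => /forallP/(_ y)/implyP; apply; rewrite xW yW exy.
- case=> H1 H2; apply/andP; split; apply/forallP=> x; first by apply/eqP; apply: H1.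
  apply/forallP=> y; apply/implyP=> /and3P[xW yW exy]; exact: H2.
Qed.

Definition relS (W T : {set V}) : rel (cmap V k) := fun a b =>
  [&& is_col V e k W a, is_col V e k W b, lab V k T a == lab V k T b & col_adj V k a b].

Lemma col_adj_sym : symmetric (col_adj V k).
Proof.
move=> a b; rewrite /col_adj.
suff -> : [set x | a x != b x] = [set x | b x != a x] by [].
by apply/setP=> u; rewrite !inE eq_sym.
Qed.

Lemma relS_sym W T : symmetric (relS W T).
Proof.
move=> a b; rewrite /relS col_adj_sym (eq_sym (lab V k T a)).
by case: (is_col V e k W a); case: (is_col V e k W b).
Qed.

Lemma connect_hom (A B : finType) (r : rel A) (r' : rel B) (f : A -> B) :
  (forall a b, r a b -> r' (f a) (f b)) ->
  forall a b, connect r a b -> connect r' (f a) (f b).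
Proof.
move=> H a b /connectP [p pth ->]; elim: p a pth => [|z p IH] a /=; first by rewrite connect0.
case/andP=> raz pth; exact: connect_trans (connect1 (H _ _ raz)) (IH _ pth).
Qed.

Lemma connect_inv (A : finType) (r : rel A) (P : A -> Prop) :
  (forall a b, r a b -> P a -> P b) -> forall a b, connect r a b -> P a -> P b.
Proof.
move=> H a b /connectP [p pth ->]; elim: p a pth => [|z p IH] a //= /andP[raz pth] Pa.
exact: IH pth (H _ _ raz Pa).
Qed.

Lemma connect_restrict (A : finType) (r : rel A) (S : {set A}) :
  (forall a b, a \in S -> r a b -> b \in S) ->
  forall a b, a \in S -> connect r a b ->
  connect (fun x y => [&& x \in S, y \in S & r x y]) a b.
Proof.
move=> H a b aS /connectP [p pth ->]; elim: p a aS pth => [|z p IH] a aS /=;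
  first by rewrite connect0.
case/andP=> raz pth; have zS := H _ _ aS raz.
apply: connect_trans (IH _ zS pth); apply: connect1; by rewrite aS zS raz.
Qed.

Definition comp W T (g : cmap V k) : {set cmap V k} := [set g' | connect (relS W T) g g'].

Lemma comp_inv W T g g' : is_col V e k W g -> g' \in comp W T g ->
  is_col V e k W g' /\ lab V k T g' = lab V k T g.
Proof.
move=> cg; rewrite inE => C.
apply: (connect_inv (P := fun a => is_col V e k W a /\ lab V k T a = lab V k T g)) C _.
- move=> a b /and4P[_ cb /eqP lab_ab _] [_ la]; split => //; by rewrite -lab_ab.
- by split.
Qed.

Lemma comp_closed W T g a b : a \in comp W T g -> relS W T a b -> b \in comp W T g.
Proof. rewrite !inE => ga ab; exact: connect_trans ga (connect1 ab). Qed.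

Lemma comp_self W T g : g \in comp W T g.
Proof. by rewrite inE connect0. Qed.

Lemma slc_sub W T S g : same_label_conn V e k W T S -> g \in S -> S \subset comp W T g.
Proof.
case=> cS [lS [_ conn]] gS; apply/subsetP=> g' g'S; rewrite inE.
apply: connect_sub (conn _ _ gS g'S) => a b /and3P[aS bS ab].
by apply: connect1; rewrite /relS cS // cS // (lS a b) // eqxx ab.
Qed.

Lemma comp_slc W T g : is_col V e k W g -> same_label_conn V e k W T (comp W T g).
Proof.
move=> cg; split; [|split].
- by move=> g' /(comp_inv cg) [].
- by move=> a b /(comp_inv cg) [_ ->] /(comp_inv cg) [_ ->].
- split; first by apply/set0Pn; exists g; exact: comp_self.
  move=> a b ga gb.
  have ab : connect (relS W T) a b.
    apply: connect_trans (_ : connect _ g b); last by rewrite inE in gb.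
    rewrite (sym_connect_sym (@relS_sym W T)); by rewrite inE in ga.
  have := connect_restrict (@comp_closed W T g) ga ab.
  apply: connect_sub => x y /and3P[xS yS /and4P[_ _ _ xy]].
  by apply: connect1; rewrite xS yS xy.
Qed.

Lemma comp_lc W T g : is_col V e k W g -> label_component V e k W T (comp W T g).
Proof.
move=> cg; split; first exact: comp_slc.
move=> S' sub slc; apply/eqP; rewrite eqEsubset; rewrite (slc_sub slc) //.
exact: (subsetP sub _ (comp_self W T g)).
Qed.

Lemma lc_comp W T S g : label_component V e k W T S -> g \in S -> S = comp W T g.
Proof.
move=> [slc max] gS; symmetry; apply: max; first exact: slc_sub slc gS.
by apply: comp_slc; case: slc => cS _; apply: cS.
Qed.

End Gen.

Section Spec.
Variables (V : finType) (e : rel V) (T : {set V}) (v : V) (k : nat).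
Hypothesis e_sym : symmetric e.
Hypothesis e_irr : irreflexive e.
Hypothesis vT : v \in T.
Hypothesis NvT : forall u, e v u -> u \in T.
Variables (N : finType) (h : rel N) (l : N -> cmap V k).

Local Notation colG := (is_col V e k [set: V]).
Local Notation colH := (is_col V e k [set~ v]).
Local Notation del := (del V k v).
Local Notation ext := (ext V k v).
Local Notation Node := (Hp_node V e k T v N l).
Implicit Types (g a b : cmap V k) (c d : 'I_k).

Lemma colH_v g : colH g -> g v = None.
Proof. case/colP=> H1 _; move: (H1 v); rewrite in_setC1 eqxx; by case: (g v). Qed.

Lemma colG_def u g : colG g -> g u != None.
Proof. case/colP=> H1 _; by rewrite H1 inE. Qed.

Lemma del_colG g : colG g -> colH (del g).
Proof.
case/colP=> H1 H2; apply/colP; split=> [x|x y].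
- rewrite ffunE in_setC1; case: (x =P v) => //= _; by rewrite H1 inE.
- rewrite !in_setC1 !ffunE => /negbTE -> /negbTE -> exy; apply: H2 => //; by rewrite inE.
Qed.

Lemma delK g c : g v = Some c -> ext c (del g) = g.
Proof. move=> gv; apply/ffunP=> u; rewrite !ffunE; case: (u =P v) => // ->; by rewrite gv. Qed.

Lemma extK a c : a v = None -> del (ext c a) = a.
Proof. move=> av; apply/ffunP=> u; rewrite !ffunE; case: (u =P v) => // ->; by rewrite av. Qed.

Lemma ext_v a c : ext c a v = Some c.
Proof. by rewrite ffunE eqxx. Qed.

Lemma labv a : lab V k (T :\ v) a v = None.
Proof. by rewrite ffunE !inE eqxx. Qed.

Lemma lab_ext a c : a v = None -> lab V k T (ext c a) = ext c (lab V k (T :\ v) a).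
Proof.
move=> av; apply/ffunP=> u; rewrite !ffunE !inE; case: (u =P v) => [->|] //=; by rewrite vT.
Qed.

Lemma lab_del g : lab V k (T :\ v) (del g) = del (lab V k T g).
Proof. apply/ffunP=> u; rewrite !ffunE !inE; by case: (u =P v). Qed.

Lemma ext_colG a c : colH a -> is_col V e k T (ext c (lab V k (T :\ v) a)) -> colG (ext c a).
Proof.
case/colP=> A1 A2 /colP [_ B2]; apply/colP; split=> [x|x y _ _ exy].
- rewrite ffunE inE; case: (x =P v) => // /eqP xv; by rewrite A1 in_setC1 xv.
- have [xv|xv] := eqVneq x v.
  + subst x. have yv : y != v by apply: contraTneq exy => ->; rewrite e_irr.
    have yT := NvT exy.
    have := B2 v y vT yT exy. by rewrite !ffunE eqxx (negbTE yv) !inE yv yT.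
  + have [yv|yv] := eqVneq y v.
    * subst y. have xT : x \in T by apply: NvT; rewrite e_sym.
      have := B2 x v xT vT exy; by rewrite !ffunE eqxx (negbTE xv) !inE xv xT.
    * rewrite !ffunE (negbTE xv) (negbTE yv); apply: A2; by rewrite ?in_setC1.
Qed.

Lemma lab_colT g : colG g -> is_col V e k T (lab V k T g).
Proof.
case/colP=> A1 A2; apply/colP; split=> [x|x y xT yT exy]; rewrite !ffunE.
- by case: ifP => xT; rewrite ?xT ?A1 ?inE.
- rewrite xT yT; apply: A2; by rewrite ?inE.
Qed.

Lemma colG_node g c : colG g -> g v = Some c ->
  is_col V e k T (ext c (lab V k (T :\ v) (del g))).
Proof.
move=> cg gv; rewrite -lab_ext ?delK //; first exact: lab_colT.
by rewrite ffunE eqxx.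
Qed.

Lemma adj_del g g' : g v = g' v -> col_adj V k (del g) (del g') = col_adj V k g g'.
Proof.
move=> gv; rewrite /col_adj.
suff -> : [set x | del g x != del g' x] = [set x | g x != g' x] by [].
apply/setP=> u; rewrite !inE !ffunE; case: (u =P v) => // ->; by rewrite gv !eqxx.
Qed.

Lemma adj_ext a b c : a v = b v -> col_adj V k (ext c a) (ext c b) = col_adj V k a b.
Proof.
move=> av; rewrite /col_adj.
suff -> : [set x | ext c a x != ext c b x] = [set x | a x != b x] by [].
apply/setP=> u; rewrite !inE !ffunE; case: (u =P v) => // ->; by rewrite av !eqxx.
Qed.

Lemma adj_ext2 a c d : c != d -> col_adj V k (ext c a) (ext d a).
Proof.
move=> cd; rewrite /col_adj.
suff -> : [set x | ext c a x != ext d a x] = [set v] by rewrite cards1.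
apply/setP=> u; rewrite !inE !ffunE; case: (u =P v) => //= _; by rewrite eqxx.
Qed.

Lemma adj_v g g' : col_adj V k g g' -> g v != g' v -> del g = del g'.
Proof.
rewrite /col_adj => /cards1P [x Hx] gv.
have : v \in [set x | g x != g' x] by rewrite inE.
rewrite Hx inE => /eqP xv; subst x.
apply/ffunP=> u; rewrite !ffunE; case: (u =P v) => // /eqP uv.
apply/eqP; apply: contraNT uv => guv.
have : u \in [set x | g x != g' x] by rewrite inE.
by rewrite Hx inE.
Qed.

Definition goodP (P : N -> {set cmap V k}) : Prop :=
 [/\ (forall x, induces_connected V k (P x)),
     (forall x g, g \in P x -> colH g),
     (forall x g, g \in P x -> lab V k (T :\ v) g = l x),
     (forall g, colH g -> exists x, g \in P x) &
     ((forall x y g, g \in P x -> g \in P y -> x = y) /\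

      (forall x y, h x y <-> x != y /\
        exists g g', [/\ g \in P x, g' \in P y & col_adj V k g g']))].

Definition Pp (P : N -> {set cmap V k}) (p : Node) : {set cmap V k} :=
  [set g | [&& colG g, del g \in P (val p).1 & g v == Some (val p).2]].

Section Fam.
Variable P : N -> {set cmap V k}.
Hypothesis HP : goodP P.

Lemma node_col a x c : a \in P x -> Hp_cond V e k T v N l (x, c) -> colG (ext c a).
Proof.
case: HP => Pconn Pcol Plab Pcov [Pdisj Pedge] aP; rewrite /Hp_cond /= => H.
apply: ext_colG; first exact: Pcol aP. by rewrite (Plab _ _ aP).
Qed.

Lemma Pp_mem a x c (H : Hp_cond V e k T v N l (x, c)) :
  a \in P x -> ext c a \in Pp P (Hp_mk V e k T v N l x c H).
Proof.
move=> aP; case: HP => Pconn Pcol Plab Pcov [Pdisj Pedge].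
rewrite inE /= (node_col aP H) extK ?(colH_v (Pcol _ _ aP)) // aP ext_v eqxx.
done.
Qed.

Lemma Pp_nonempty p : Pp P p != set0.
Proof.
case: HP => Pconn Pcol Plab Pcov [Pdisj Pedge].
case: p => [[x c] H]; case: (Pconn x) => /set0Pn [a aP] _; apply/set0Pn.
exists (ext c a); exact: Pp_mem.
Qed.

Lemma Pp_col p g : g \in Pp P p -> colG g.
Proof. by rewrite inE => /and3P[]. Qed.

Lemma Pp_lab p g : g \in Pp P p -> lab V k T g = Hp_lab V e k T v N l p.
Proof.
case: HP => Pconn Pcol Plab Pcov [Pdisj Pedge].
case: p => [[x c] H]; rewrite inE /= => /and3P[cg dg /eqP gv].
rewrite /Hp_lab /= -(Plab _ _ dg) -lab_ext ?delK //.
by rewrite ffunE eqxx.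
Qed.

Lemma Pp_cover g : colG g -> exists p, g \in Pp P p.
Proof.
case: HP => Pconn Pcol Plab Pcov [Pdisj Pedge].
move=> cg; case E: (g v) => [c|]; last by move: (colG_def v cg); rewrite E.
have [x dx] := Pcov _ (del_colG cg).
have Hc : Hp_cond V e k T v N l (x, c).
  by rewrite /Hp_cond /= -(Plab _ _ dx); apply: colG_node.
exists (Hp_mk V e k T v N l x c Hc). by rewrite inE cg dx E eqxx.
Qed.

Lemma Pp_disj p q g : g \in Pp P p -> g \in Pp P q -> p = q.
Proof.
case: HP => Pconn Pcol Plab Pcov [Pdisj Pedge].
case: p => [[x c] Hp]; case: q => [[y d] Hq].
rewrite !inE /= => /and3P[_ d1 /eqP v1] /and3P[_ d2 /eqP v2].
apply: val_inj => /=; rewrite (Pdisj _ _ _ d1 d2); rewrite v1 in v2; by case: v2 => ->.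
Qed.

Lemma Pp_conn p : induces_connected V k (Pp P p).
Proof.
split; first exact: Pp_nonempty.
case: HP => Pconn Pcol Plab Pcov [Pdisj Pedge].
case: p => [[x c] H] g1 g2; rewrite !inE /= => /and3P[c1 d1 /eqP v1] /and3P[c2 d2 /eqP v2].
case: (Pconn x) => _ /(_ _ _ d1 d2) C.
rewrite -(delK v1) -(delK v2); apply: connect_hom C => a b /and3P[aP bP ab].
rewrite (Pp_mem H aP) (Pp_mem H bP) /=.
by rewrite adj_ext // (colH_v (Pcol _ _ aP)) (colH_v (Pcol _ _ bP)).
Qed.

Lemma Pp_edge p q : Hp_edge V e k T v N h l p q <->
  p != q /\ exists g g', [/\ g \in Pp P p, g' \in Pp P q & col_adj V k g g'].
Proof.
case: HP => Pconn Pcol Plab Pcov [Pdisj Pedge].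
case: p => [[x c] Hp]; case: q => [[y d] Hq]; rewrite /Hp_edge /=.
split.
- case/andP=> pq H; split => //; case/orP: H => [/eqP xy | /andP[hxy /eqP cd]].
  + subst y.
    have cd : c != d by apply: contraNneq pq => cd; subst d; apply/eqP/val_inj.
    case: (Pconn x) => /set0Pn [a aP] _.
    exists (ext c a), (ext d a); split; [exact: Pp_mem|exact: Pp_mem|exact: adj_ext2].
  + subst d; have [_ [a [b [aP bP ab]]]] := (Pedge x y).1 hxy.
    exists (ext c a), (ext c b); split; [exact: Pp_mem|exact: Pp_mem|].
    by rewrite adj_ext // (colH_v (Pcol _ _ aP)) (colH_v (Pcol _ _ bP)).
- case=> pq [g [g' [gp gq adj]]]; rewrite pq /=.
  move: gp gq; rewrite !inE /= => /and3P[_ dg /eqP gv] /and3P[_ dg' /eqP g'v].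
  have [xy|xy] := eqVneq x y; first by [].
  have [vv|vv] := eqVneq (g v) (g' v).
  + apply/orP; right; move: (vv); rewrite gv g'v => -[->]; rewrite eqxx andbT.
    apply/(Pedge x y).2; split=> //; exists (del g), (del g'); split=> //.
    by rewrite adj_del.
  + rewrite (adj_v adj vv) in dg; by rewrite (Pdisj _ _ _ dg dg') eqxx in xy.
Qed.

Lemma Pp_labdiff (Hl : forall x y, h x y -> l x != l y) p q :
  Hp_edge V e k T v N h l p q -> Hp_lab V e k T v N l p != Hp_lab V e k T v N l q.
Proof.
case: HP => Pconn Pcol Plab Pcov [Pdisj Pedge].
case: p => [[x c] Hp]; case: q => [[y d] Hq].
rewrite /Hp_edge /Hp_lab /= => /andP[pq /orP[/eqP xy | /andP[hxy /eqP cd]]].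
- subst y.
  have cd : c != d by apply: contraNneq pq => cd; subst d; apply/eqP/val_inj.
  apply: contra cd => /eqP E; have := congr1 (fun f : cmap V k => f v) E.
  by rewrite !ext_v => -[->].
- subst d; apply: contra (Hl _ _ hxy) => /eqP E.
  case: (Pconn x) => /set0Pn [a aP] _; case: (Pconn y) => /set0Pn [b bP] _.
  have lxv : l x v = None by rewrite -(Plab _ _ aP) labv.
  have lyv : l y v = None by rewrite -(Plab _ _ bP) labv.
  by rewrite -(extK c lxv) -(extK c lyv) E.
Qed.

Lemma Pp_slc p : same_label_conn V e k [set: V] T (Pp P p).
Proof.
split; [exact: Pp_col | split; last exact: Pp_conn].
by move=> a b ap bp; rewrite (Pp_lab ap) (Pp_lab bp).
Qed.

Lemma Pp_sub (HPlc : forall x, label_component V e k [set~ v] (T :\ v) (P x))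
  S g p : same_label_conn V e k [set: V] T S -> g \in S -> g \in Pp P p ->
  S \subset Pp P p.
Proof.
move=> slc gS; case: p => [[x c] H]; rewrite inE /= => /and3P[cg dg /eqP gv].
case: (slc) => cS [lS [_ conn]].
have dS : same_label_conn V e k [set~ v] (T :\ v) [set del a | a in S].
  split; [|split].
  - move=> a /imsetP [b bS ->]; exact: del_colG (cS _ bS).
  - move=> a b /imsetP [a' aS ->] /imsetP [b' bS ->]; by rewrite !lab_del (lS a' b').
  - split; first by apply/set0Pn; exists (del g); apply: imset_f.
    move=> a b /imsetP [a' aS ->] /imsetP [b' bS ->].
    apply: connect_hom (conn _ _ aS bS) => a0 b0 /and3P[a0S b0S ab].
    rewrite !imset_f // adj_del //.
    by have := congr1 (fun f : cmap V k => f v) (lS _ _ a0S b0S); rewrite !ffunE vT.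
have sub := slc_sub dS (imset_f (fun a => del a) gS).
rewrite -(lc_comp (HPlc x) dg) in sub.
apply/subsetP=> g' g'S; rewrite inE /=.
rewrite (cS _ g'S) (subsetP sub _ (imset_f (fun a => del a) g'S)) /=.
have := congr1 (fun f : cmap V k => f v) (lS _ _ g'S gS); rewrite !ffunE vT gv => ->.
by rewrite eqxx.
Qed.

End Fam.

Lemma core (HC : is_contracted V e k [set~ v] (T :\ v) N h l) :
  is_contracted V e k [set: V] T (Hp_node V e k T v N l)
    (Hp_edge V e k T v N h l) (Hp_lab V e k T v N l)
  /\
  (forall S : N -> {set cmap V k},
     certificate V e k [set~ v] (T :\ v) N h l S ->
     exists S' : Hp_node V e k T v N l -> {set cmap V k},
       certificate V e k [set: V] T (Hp_node V e k T v N l)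
         (Hp_edge V e k T v N h l) (Hp_lab V e k T v N l) S' /\
       (forall (g : cmap V k) (x : N) (c : 'I_k)
               (Hxc : Hp_cond V e k T v N l (x, c)),
          is_col V e k [set: V] g ->
          del g \in S x -> g v = Some c ->
          g \in S' (Hp_mk V e k T v N l x c Hxc))).
Proof.
split.
- case: HC => phi [inj iff edge labl].
  have lcx : forall x, label_component V e k [set~ v] (T :\ v) (phi x).
    by move=> x; apply/iff; exists x.
  have HP : goodP phi.
    split.
    + by move=> x; case: (lcx x) => [[_ [_ ?]] _].
    + by move=> x g gP; case: (lcx x) => [[cS _] _]; apply: cS.
    + exact: labl.
    + move=> g cg; have [x Ex] := (iff _).1 (@comp_lc V e k [set~ v] (T :\ v) g cg).
      by exists x; rewrite Ex comp_self.
    + split; last exact: edge.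
      move=> x y g gx gy; apply: inj.
      by rewrite (lc_comp (lcx x) gx) (lc_comp (lcx y) gy).
  exists (Pp phi); split.
  + move=> p q E; have /set0Pn [g gp] := Pp_nonempty HP p.
    apply: (Pp_disj HP gp); by rewrite -E.
  + move=> S; split.
    * move=> lcS; case: (lcS) => [[cS [_ [/set0Pn [g gS] _]]] max].
      have [p gp] := Pp_cover HP (cS _ gS).
      exists p; exact: max (Pp_sub lcx lcS.1 gS gp) (Pp_slc HP p).
    * case=> p <-; split; first exact: Pp_slc.
      move=> S' sub slc'; apply/eqP; rewrite eqEsubset sub andbT.
      have /set0Pn [g gp] := Pp_nonempty HP p.
      exact: (@Pp_sub phi lcx S' g p slc' (subsetP sub _ gp) gp).
  + exact: Pp_edge HP.
  + move=> p g; exact: (@Pp_lab phi HP p g).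
- move=> S [S0 [Scol [Scov [Sdisj [Slab [Sh [Sconn Sedge]]]]]]].
  have HP : goodP S.
    split => //; split => // x y; split.
    + move=> hxy; have xy : x != y.
        by apply: contraTneq (Sh _ _ hxy) => ->; rewrite eqxx.
      split=> //; exact/(Sedge _ _ xy).
    + by case=> xy /(Sedge _ _ xy).
  exists (Pp S); split.
  + split; first exact: Pp_nonempty HP.
    split; first exact: Pp_col.
    split; first exact: Pp_cover HP.
    split; first exact: Pp_disj HP.
    split; first exact: Pp_lab HP.
    split; first exact: Pp_labdiff HP Sh.
    split; first exact: Pp_conn HP.
    move=> p q pq; split; first by case/(Pp_edge HP p q).
    by move=> H; apply/(Pp_edge HP p q); split.
  + move=> g x c Hxc cg dg gv; by rewrite inE cg dg gv eqxx.
Qed.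

End Spec.

Theorem lemma3 (V : finType) (e : rel V) (T : {set V}) (v : V) (k : nat)
  (e_sym : symmetric e) (e_irr : irreflexive e)
  (Hintro : introduces V e T v) (Hk : 0 < k)
  (N : finType) (h : rel N) (l : N -> cmap V k)
  (HC : is_contracted V e k [set~ v] (T :\ v) N h l) :
  is_contracted V e k [set: V] T (Hp_node V e k T v N l)
    (Hp_edge V e k T v N h l) (Hp_lab V e k T v N l)
  /\
  (forall S : N -> {set cmap V k},
     certificate V e k [set~ v] (T :\ v) N h l S ->
     exists S' : Hp_node V e k T v N l -> {set cmap V k},
       certificate V e k [set: V] T (Hp_node V e k T v N l)
         (Hp_edge V e k T v N h l) (Hp_lab V e k T v N l) S' /\
       (forall (g : cmap V k) (x : N) (c : 'I_k)
               (Hxc : Hp_cond V e k T v N l (x, c)),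
          is_col V e k [set: V] g ->
          del V k v g \in S x -> g v = Some c ->
          g \in S' (Hp_mk V e k T v N l x c Hxc))).
Proof.
case: Hintro => _ vT NvT.
exact: (@core V e T v k e_sym e_irr vT NvT N h l HC).
Qed.
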